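(* Let $m,n$ be positive integers. The simplicial rook graph $\mathcal{SR}(m,n)$ is Hamiltonian, except in the cases $m=1$ and $(m,n)=(2,1)$.
   Context: For positive integers $m,n$, the simplicial rook graph $\mathcal{SR}(m,n)$ is the graph whose vertices are the vectors $(a_1,\dots,a_m)\in\mathbb{N}^m$ (nonnegative integer coordinates) with $a_1+\cdots+a_m=n$, two vertices being adjacent if and only if their vectors differ in exactly two coordinates. A graph is Hamiltonian if it has a cycle passing through every vertex exactly once. *)

(* Defs.v *)
From mathcomp Require Import all_boot.
Set Implicit Arguments. Unset Strict Implicit. Unset Printing Implicit Defensive.

(* Vertices of SR(m,n): vectors (a_1..a_m) of nonnegative integers with sum n.
   Each coordinate is at most n, so we store it in 'I_n.+1; the coercion to
   nat recovers the integer value. *)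
Definition SRvert (m n : nat) :=
  {f : {ffun 'I_m -> 'I_n.+1} | \sum_(i < m) (f i : nat) == n}.

Definition SRadj (m n : nat) : rel (SRvert m n) :=
  fun u v => #|[set i : 'I_m | val u i != val v i]| == 2.

Definition hamiltonian (T : finType) (e : rel T) : Prop :=
  exists s : seq T, [/\ uniq s, size s = #|T|, 3 <= size s & cycle e s].

(* Main.v *)
Require Import Defs.
From mathcomp Require Import all_boot zify.
Set Implicit Arguments. Unset Strict Implicit. Unset Printing Implicit Defensive.

Fixpoint dc (u v : seq nat) : nat :=
  match u, v with a :: u', b :: v' => (a != b) + dc u' v' | _, _ => 0 end.
Definition adj (u v : seq nat) := dc u v == 2.

Lemma dc_sym u v : dc u v = dc v u.
Proof. by elim: u v => [|a u IH] [|b v] //=; rewrite IH eq_sym. Qed.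
Lemma dc_refl u : dc u u = 0.
Proof. by elim: u => //= a u ->; rewrite eqxx. Qed.

Definition va m N := rcons (nseq m 0) N.
Definition vb m N := N :: nseq m 0.

Lemma dc_a m x : dc (va m x.+1) (va m x) = 1.
Proof. elim: m => [|m IH] /=; last by rewrite IH. by rewrite gtn_eqF. Qed.
Lemma dc_b m x : dc (vb m x.+1) (vb m x) = 1.
Proof. by rewrite /= dc_refl gtn_eqF ?ltnSn. Qed.
Lemma dc_close0 p n : dc (rcons (nseq p 0) n) (nseq p.+1 0) = (n != 0).
Proof. elim: p => [|p IH] /=; last by rewrite IH. by rewrite addn0. Qed.
Lemma dc_close p n : 0 < n -> dc (va p.+1 n) (vb p.+1 n) = 2.
Proof. by move=> hn; rewrite /= dc_close0 eq_sym -lt0n hn. Qed.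
Lemma va0 m : va m 0 = nseq m.+1 0.
Proof. by rewrite /va; elim: m => //= m ->. Qed.

Definition goes (s : seq (seq nat)) (u v : seq nat) :=
  exists r, [/\ s = u :: r, path adj u r & last u r = v].

Lemma goes_rev s u v : goes s u v -> goes (rev s) v u.
Proof.
case=> r [-> hp hl]; exists (rev (belast u r)); split.
- by rewrite lastI rev_rcons hl.
- rewrite -hl rev_path; apply: etrans hp; apply: eq_path => x y.
  by rewrite /adj dc_sym.
- case: r hl {hp} => [/= ->|y r _] //=; by rewrite rev_cons last_rcons.
Qed.

Lemma goes_map k s u v : goes s u v -> goes (map (cons k) s) (k :: u) (k :: v).
Proof.
case=> r [-> hp hl]; exists (map (cons k) r); split => //.
- rewrite path_map; apply: etrans hp; apply: eq_path => x y.
  by rewrite /relpre /adj /= eqxx.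
- by rewrite last_map hl.
Qed.

Lemma goes_cat s t u v w z : goes s u v -> goes t w z -> adj v w -> goes (s ++ t) u z.
Proof.
case=> r [-> hp hl] [r' [-> hp' hl']] h; exists (r ++ w :: r'); split => //.
- by rewrite cat_path hp hl /= h hp'.
- by rewrite last_cat hl.
Qed.

Definition O k (s : seq (seq nat)) := if odd k then rev s else s.
Fixpoint lay (f : nat -> seq (seq nat)) (N k j : nat) : seq (seq nat) :=
  if j is j'.+1 then map (cons k) (O k (f (N - k))) ++ lay f N k.+1 j' else [::].
Fixpoint P (m N : nat) {struct m} : seq (seq nat) :=
  match m with 0 => [:: [:: N]] | m'.+1 => lay (P m') N 0 N.+1 end.

Lemma mem_map_cons (k : nat) (s : seq (seq nat)) (v : seq nat) :
  (v \in map (cons k) s) = if v is c :: x then (c == k) && (x \in s) else false.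
Proof.
case: v => [|c x]; first by apply/negbTE/mapP => -[].
elim: s => [|y s IH] /=; first by rewrite !in_nil andbF.
by rewrite in_cons IH eqseq_cons -andb_orr.
Qed.

Lemma mem_lay f N k j (v : seq nat) : v \in lay f N k j =
  if v is c :: x then (k <= c < k + j) && (x \in f (N - c)) else false.
Proof.
elim: j k => [|j IH] k /=.
  case: v => // c x; rewrite in_nil.
  by have -> : (k <= c < k + 0) = false by lia.
rewrite mem_cat {}IH mem_map_cons; case: v => // c x.
rewrite /O; case: (eqVneq c k) => [->|ne] /=.
  have -> : (k <= k < k + j.+1) by lia.
  by rewrite ltnn /= orbF; case: odd; rewrite ?mem_rev.
have -> : (k.+1 <= c < k.+1 + j) = (k <= c < k + j.+1).
  by apply/idP/idP => /andP [h1 h2]; apply/andP; split; lia.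
by [].
Qed.

Lemma mem_P m N (v : seq nat) : v \in P m N = (size v == m.+1) && (sumn v == N).
Proof.
elim: m N v => [|m IH] N v.
  rewrite /= in_cons in_nil orbF.
  case: v => [|c [|d x]] //=; rewrite eqseq_cons ?andbT ?addn0 //.
  by rewrite /= andbF.
rewrite (_ : P m.+1 N = lay (P m) N 0 N.+1) //.
rewrite mem_lay; case: v => // c x; rewrite IH /= eqSS.
case: (size x == m.+1) => /=; last by rewrite andbF.
apply/andP/eqP => [[h1 /eqP h2]|h]; first lia.
by split; [lia | apply/eqP; lia].
Qed.

Lemma uniq_lay f N k j : (forall N', uniq (f N')) -> uniq (lay f N k j).
Proof.
move=> hf; elim: j k => [|j IH] k //=.
rewrite cat_uniq IH andbT map_inj_uniq; last by move=> x y [].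
rewrite /O; case: odd; rewrite ?rev_uniq hf /=;
apply/hasPn => v; rewrite mem_lay; case: v => // c x /andP [/andP [h _] _];
by rewrite mem_map_cons gtn_eqF.
Qed.

Lemma uniq_P m N : uniq (P m N).
Proof. elim: m N => [//|m IH] N; exact: uniq_lay. Qed.

Lemma goes_lay f N m (hf : forall N', goes (f N') (va m N') (vb m N')) j k :
  k + j <= N ->
  goes (lay f N k j.+1)
    (k :: (if odd k then vb m (N - k) else va m (N - k)))
    ((k + j) :: (if odd (k + j) then va m (N - (k + j)) else vb m (N - (k + j)))).
Proof.
have blk k' : goes (map (cons k') (O k' (f (N - k'))))
    (k' :: (if odd k' then vb m (N - k') else va m (N - k')))
    (k' :: (if odd k' then va m (N - k') else vb m (N - k'))).
  apply: goes_map; rewrite /O; case: odd => //; exact: goes_rev.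
elim: j k => [|j IH] k hk.
  by rewrite /= cats0 addn0; apply: blk.
rewrite /= -/(lay f N k.+1 j.+1).
have hk' : k.+1 + j <= N by lia.
apply: goes_cat (blk k) _ _; first by rewrite -addSnnS; apply: IH.
have hkN : k < N by lia.
rewrite /adj /= -(subnSK hkN) (ltn_eqF (ltnSn k)); case: odd => /=;
by rewrite ?dc_a ?dc_refl ?(gtn_eqF (ltnSn _)).
Qed.

Lemma goes_P m N : goes (P m N) (va m N) (vb m N).
Proof.
elim: m N => [|m IH] N; first by exists [::].
have := @goes_lay (P m) N m IH N 0 (leqnn N).
rewrite /= subn0 subnn add0n va0 /=.
by case: odd.
Qed.

Definition toseq m n (v : SRvert m n) : seq nat := [seq (val v i : nat) | i <- enum 'I_m].

Lemma sumn_enum m (F : 'I_m -> nat) : sumn [seq F i | i <- enum 'I_m] = \sum_(i < m) F i.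
Proof. by rewrite sumnE big_map big_enum. Qed.

Lemma map_nth_enum m (x : seq nat) : size x = m -> [seq nth 0 x i | i : 'I_m <- enum 'I_m] = x.
Proof.
move=> hs; have -> : [seq nth 0 x i | i : 'I_m <- enum 'I_m] = map (nth 0 x) (map val (enum 'I_m)) by rewrite -map_comp.
rewrite val_enum_ord -hs.
by rewrite -{3}(mkseq_nth 0 x).
Qed.

Lemma toseq_size m n (v : SRvert m n) : size (toseq v) = m.
Proof. by rewrite size_map size_enum_ord. Qed.

Lemma toseq_sum m n (v : SRvert m n) : sumn (toseq v) = n.
Proof. by rewrite sumn_enum; apply/eqP; case: v. Qed.

Lemma toseq_inj m n : injective (@toseq m n).
Proof.
move=> u v /eq_in_map h; apply: val_inj; apply/ffunP => i; apply: val_inj.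
by apply: h; rewrite mem_enum.
Qed.

Definition mkf m n (x : seq nat) : {ffun 'I_m -> 'I_n.+1} := [ffun i : 'I_m => inord (nth 0 x i)].

Lemma nth_le_sumn (s : seq nat) i : nth 0 s i <= sumn s.
Proof. elim: s i => [|a s IH] [|i] //=; [exact: leq_addr | apply: leq_trans (IH i) _; exact: leq_addl]. Qed.

Lemma mkfE m n x i : sumn x = n -> (mkf m n x i : nat) = nth 0 x i.
Proof. by move=> hs; rewrite ffunE inordK // ltnS -hs nth_le_sumn. Qed.

Lemma mkf_ok m n x : size x = m -> sumn x = n -> \sum_(i < m) (mkf m n x i : nat) == n.
Proof.
move=> h1 h2; rewrite -sumn_enum.
rewrite (eq_map (fun i => @mkfE m n x i h2)) map_nth_enum //.
by rewrite h2.
Qed.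

Definition tov m n (v0 : SRvert m n) (x : seq nat) : SRvert m n := insubd v0 (mkf m n x).

Lemma toseq_tov m n (v0 : SRvert m n) x : size x = m -> sumn x = n -> toseq (tov v0 x) = x.
Proof.
move=> h1 h2; rewrite /toseq /tov insubdK; last exact: mkf_ok.
by rewrite (eq_map (fun i => @mkfE m n x i h2)) map_nth_enum.
Qed.

Lemma dc_map_count (T : Type) (f g : T -> nat) s :
  dc (map f s) (map g s) = count (fun i => f i != g i) s.
Proof. by elim: s => //= a s ->. Qed.

Lemma SRadjE m n (u v : SRvert m n) : SRadj u v = adj (toseq u) (toseq v).
Proof.
rewrite /SRadj /adj /toseq dc_map_count -sum1dep_card.
by rewrite -sum1_count big_enum_cond.
Qed.

Lemma small_no m n (s : seq (SRvert m n)) (l : seq (seq nat)) :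
  uniq s -> (forall x, size x = m -> sumn x = n -> x \in l) -> size s <= size l.
Proof.
move=> us hl; rewrite -(size_map (@toseq m n)).
apply: uniq_leq_size; first by rewrite map_inj_uniq //; exact: toseq_inj.
move=> x /mapP [v _ ->]; apply: hl; [exact: toseq_size | exact: toseq_sum].
Qed.

Theorem theorem3 (m n : nat) (hm : 0 < m) (hn : 0 < n) :
  hamiltonian (@SRadj m n) <-> ~ (m = 1 \/ (m = 2 /\ n = 1)).
Proof.
split.
  case=> s [us _ h3 _] [h1 | [h1 h2]]; subst.
    have : size s <= 1.
      apply: (small_no (l := [:: [:: n]]) us) => -[|c [|d x]] //= _; rewrite addn0 => ->.
      by rewrite inE.
    lia.
  have : size s <= 2.
    apply: (small_no (l := [:: [:: 1; 0]; [:: 0; 1]]) us) => -[|c [|d [|e x]]] //= _.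
    by case: c => [|[|c]]; case: d => [|[|d]] //=; lia.
  lia.
move=> hnot.
case: m hm hnot => [//|[|p]] _ hnot; first by case: hnot; left.
have vok : size (va p.+1 n) = p.+2 /\ sumn (va p.+1 n) = n.
  by rewrite /va size_rcons size_nseq -cats1 sumn_cat sumn_nseq /=; split; lia.
pose v0 : SRvert p.+2 n := Sub (mkf p.+2 n (va p.+1 n)) (mkf_ok vok.1 vok.2).
have [r [hL hp hl]] := goes_P p.+1 n.
set L := P p.+1 n in hL.
have memL x : (x \in L) = (size x == p.+2) && (sumn x == n) by rewrite mem_P.
have memL' x : x \in L -> size x = p.+2 /\ sumn x = n.
  by rewrite memL => /andP [/eqP -> /eqP ->].
exists (map (tov v0) L).
have us : uniq (map (tov v0) L).
  rewrite map_inj_in_uniq ?uniq_P // => x y hx hy e.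
  have [hx1 hx2] := memL' x hx; have [hy1 hy2] := memL' y hy.
  by have := congr1 (@toseq _ _) e; rewrite !toseq_tov.
have allin v : v \in map (tov v0) L.
  have -> : v = tov v0 (toseq v).
    by apply: toseq_inj; rewrite toseq_tov // ?toseq_size ?toseq_sum.
  by apply: map_f; rewrite memL toseq_size toseq_sum !eqxx.
split => //.
- rewrite cardT; apply/perm_size/uniq_perm => //; first exact: enum_uniq.
  by move=> v; rewrite allin mem_enum.
- rewrite size_map.
  have [w1 [w2 [w3 [hu hw]]]] : exists w1 w2 w3 : seq nat, uniq [:: w1; w2; w3] /\
      all (fun x => (size x == p.+2) && (sumn x == n)) [:: w1; w2; w3].
    clear -hn hnot; case: p hnot => [|q] hnot.
      case: n hn hnot => [|[|n']] // _ hnot; first by case: hnot; right.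
      exists [:: n'.+2; 0], [:: 0; n'.+2], [:: 1; n'.+1]; split => //=.
      rewrite !addn0 addnS !eqxx; done.
    case: n hn hnot => [//|n'] _ _.
    exists [:: n'.+1, 0, 0 & nseq q 0], [:: 0, n'.+1, 0 & nseq q 0],
           [:: 0, 0, n'.+1 & nseq q 0]; split => //=.
    by rewrite size_nseq sumn_nseq !eqxx /= mul0n !addn0 !add0n eqxx.
  have := uniq_leq_size hu; apply => x hx; rewrite memL.
  by move/allP: hw; apply.
- have e2 : {in mem L &, relpre (tov v0) (@SRadj p.+2 n) =2 adj}.
    move=> x y hx hy; rewrite /relpre /= SRadjE.
    have [hx1 hx2] := memL' x hx; have [hy1 hy2] := memL' y hy.
    by rewrite !toseq_tov.
  rewrite cycle_map (eq_in_cycle e2); last by apply/allP.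
  by rewrite hL /= rcons_path hp hl /adj dc_sym dc_close.
Qed.
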